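(* Let $W\subseteq C^\omega$ be a prefix-independent objective, $\kappa$ a cardinal, and $U$ a $C$-graph which is almost $(\kappa,W)$-universal. Then the $C$-graph $U\ltimes\kappa$ is $(\kappa,W)$-universal for prefix-independent objectives.
   Context: A $C$-pregraph: vertex set $V(G)$, edges $E(G)\subseteq V(G)\times C\times V(G)$ written $v\xrightarrow{c}v'$; a $C$-graph if every vertex has an outgoing edge. A $C$-pretree is a $C$-pregraph with root $t_0$ such that every vertex has a unique path from $t_0$; for a vertex $t$, $T[t]$ is the restriction of $T$ to vertices reachable from $t$. A morphism maps vertices so that $v\xrightarrow{c}v'$ implies $\phi(v)\xrightarrow{c}\phi(v')$. A (pre)graph satisfies $W$ if every infinite path from every vertex has colour sequence in $W$. $W$ is prefix-independent if $uw\in W\iff w\in W$ for all $u\in C^*,w\in C^\omega$. $U$ is almost $(\kappa,W)$-universal if $U$ satisfies $W$ and every $C$-pretree $T$ of cardinality $<\kappa$ satisfying $W$ has a vertex $t$ such that $T[t]$ admits a morphism into $U$. $U$ is $(\kappa,W)$-universal for prefix-independent objectives if $U$ satisfies $W$ and every $C$-pretree of cardinality $<\kappa$ satisfying $W$ admits a morphism into $U$. For an ordinal $\alpha$, $U\ltimes\alpha$ is the graph with vertex set $V(U)\times\alpha$ and edges $(v,\lambda)\xrightarrow{c}(v',\lambda')$ whenever $\lambda>\lambda'$, or $\lambda=\lambda'$ and $v\xrightarrow{c}v'\in E(U)$. *)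

(* Defs.v *)
From Stdlib Require Import List.
Import ListNotations.
Set Implicit Arguments.

Section Graphs.
Variable C : Type.

Definition is_graph (V : Type) (E : V -> C -> V -> Prop) : Prop :=
  forall v, exists c v', E v c v'.

(** finite paths: [fpath E v l w] : l is the list of (colour, target) of the
    successive edges of a path from v to w *)
Inductive fpath (V : Type) (E : V -> C -> V -> Prop) : V -> list (C * V) -> V -> Prop :=
| fpath_nil : forall v, fpath E v [] v
| fpath_cons : forall v c v' l w, E v c v' -> fpath E v' l w -> fpath E v ((c, v') :: l) w.

Definition reachable (V : Type) (E : V -> C -> V -> Prop) (v w : V) : Prop :=
  exists l, fpath E v l w.

Definition is_pretree (V : Type) (E : V -> C -> V -> Prop) (t0 : V) : Prop :=
  forall t, exists l, fpath E t0 l t /\ forall l', fpath E t0 l' t -> l' = l.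

Definition sub_vert (V : Type) (E : V -> C -> V -> Prop) (t : V) : Type :=
  { v : V | reachable E t v }.

Definition sub_edge (V : Type) (E : V -> C -> V -> Prop) (t : V)
  (x : sub_vert E t) (c : C) (y : sub_vert E t) : Prop :=
  E (proj1_sig x) c (proj1_sig y).

Definition is_morphism (V1 V2 : Type) (E1 : V1 -> C -> V1 -> Prop)
  (E2 : V2 -> C -> V2 -> Prop) (f : V1 -> V2) : Prop :=
  forall v c v', E1 v c v' -> E2 (f v) c (f v').

Definition has_morphism (V1 V2 : Type) (E1 : V1 -> C -> V1 -> Prop)
  (E2 : V2 -> C -> V2 -> Prop) : Prop :=
  exists f : V1 -> V2, is_morphism E1 E2 f.

Definition satisfies (V : Type) (E : V -> C -> V -> Prop) (W : (nat -> C) -> Prop) : Prop :=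
  forall (v : nat -> V) (c : nat -> C), (forall n, E (v n) (c n) (v (S n))) -> W c.

Fixpoint prepend (u : list C) (w : nat -> C) : nat -> C :=
  match u with
  | [] => w
  | a :: u' => fun n => match n with 0 => a | S m => prepend u' w m end
  end.

Definition prefix_independent (W : (nat -> C) -> Prop) : Prop :=
  forall (u : list C) (w : nat -> C), W (prepend u w) <-> W w.

End Graphs.

(** Cardinals: a cardinal kappa is represented as an initial ordinal, i.e. a type K
    with a strict well-order ltK such that no proper initial segment is
    equinumerous with (injects) K. *)
Definition injective {A B : Type} (f : A -> B) : Prop := forall x y, f x = f y -> x = y.

Definition is_cardinal (K : Type) (ltK : K -> K -> Prop) : Prop :=
  (forall x y z, ltK x y -> ltK y z -> ltK x z) /\
  (forall x y, ltK x y \/ x = y \/ ltK y x) /\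
  well_founded ltK /\
  (forall k : K, ~ exists f : K -> { x : K | ltK x k }, injective f).

Definition card_lt (V K : Type) : Prop :=
  (exists f : V -> K, injective f) /\ ~ (exists g : K -> V, injective g).

Definition lex_prod (C VU K : Type) (EU : VU -> C -> VU -> Prop) (ltK : K -> K -> Prop)
  (x : VU * K) (c : C) (y : VU * K) : Prop :=
  ltK (snd y) (snd x) \/ (snd x = snd y /\ EU (fst x) c (fst y)).

Definition almost_universal (C K VU : Type) (W : (nat -> C) -> Prop)
  (ltK : K -> K -> Prop) (EU : VU -> C -> VU -> Prop) : Prop :=
  satisfies EU W /\
  forall (V : Type) (E : V -> C -> V -> Prop) (t0 : V),
    is_pretree E t0 -> card_lt V K -> satisfies E W ->
    exists t : V, has_morphism (@sub_edge C V E t) EU.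

Definition universal_pi (C K VU : Type) (W : (nat -> C) -> Prop)
  (ltK : K -> K -> Prop) (EU : VU -> C -> VU -> Prop) : Prop :=
  satisfies EU W /\
  forall (V : Type) (E : V -> C -> V -> Prop) (t0 : V),
    is_pretree E t0 -> card_lt V K -> satisfies E W ->
    has_morphism E EU.

(* Main.v *)
Require Import Defs.
From Stdlib Require Import List Arith Classical ClassicalEpsilon FunctionalExtensionality PropExtensionality.
Import ListNotations.
Set Implicit Arguments.

Lemma fpath_snoc C V (E : V -> C -> V -> Prop) x l y c z :
  fpath E x l y -> E y c z -> fpath E x (l ++ [(c,z)]) z.
Proof.
  induction 1; intros; simpl.
  - econstructor; [eassumption| constructor].
  - econstructor; eauto.
Qed.

Lemma closed_path C V (E : V -> C -> V -> Prop) (S : V -> Prop) :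
  (forall v c w, E v c w -> S v -> S w) ->
  forall x l y, fpath E x l y -> S x -> S y.
Proof. intros HS x l y H; induction H; eauto. Qed.

Definition prj C V (P : V -> Prop) (p : C * {v | P v}) : C * V := (fst p, proj1_sig (snd p)).

Lemma fpath_proj C V (E : V -> C -> V -> Prop) (P : V -> Prop) x l y :
  fpath (fun (a : {v|P v}) c b => E (proj1_sig a) c (proj1_sig b)) x l y ->
  fpath E (proj1_sig x) (map (@prj C V P) l) (proj1_sig y).
Proof. induction 1; simpl; [constructor | econstructor; eauto]. Qed.

Lemma fpath_lift C V (E : V -> C -> V -> Prop) (S : V -> Prop) :
  (forall v c w, E v c w -> S v -> S w) ->
  forall x l y, fpath E x l y -> forall (hx : ~ S x) (hy : ~ S y),
  exists l', fpath (fun (a : {v| ~ S v}) c b => E (proj1_sig a) c (proj1_sig b))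
     (exist _ x hx) l' (exist _ y hy) /\ map (@prj C V (fun v => ~ S v)) l' = l.
Proof.
  intros HS x l y H; induction H; intros hx hy.
  - rewrite (proof_irrelevance _ hx hy). exists []. split; [constructor| reflexivity].
  - assert (hv : ~ S v'). { intro Hs. apply hy. eapply closed_path; eauto. }
    destruct (IHfpath hv hy) as [l' [Hp Hm]].
    exists ((c, exist _ v' hv) :: l'). split.
    + econstructor; [exact H | exact Hp].
    + simpl. rewrite Hm. reflexivity.
Qed.

Lemma map_prj_inj C V P (l1 l2 : list (C * {v : V | P v})) :
  map (@prj C V P) l1 = map (@prj C V P) l2 -> l1 = l2.
Proof.
  revert l2; induction l1 as [|[c [v h]] l1 IH]; intros [|[c' [v' h']] l2]; cbn; intro H;
    try discriminate; auto.
  injection H; intros Hl Hv Hc. subst. rewrite (proof_irrelevance _ h h'). f_equal. apply IH; auto.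
Qed.

Lemma wf_irrefl K (R : K -> K -> Prop) : well_founded R -> forall a, ~ R a a.
Proof. intros Hwf a. induction (Hwf a) as [a _ IH]. intro H. exact (IH a H H). Qed.

Fixpoint pre (C : Type) (N : nat) (c : nat -> C) : list C :=
  match N with 0 => [] | S N' => c 0 :: pre N' (fun i => c (S i)) end.

Lemma prepend_pre C N (c : nat -> C) n : prepend (pre N c) (fun i => c (N + i)) n = c n.
Proof.
  revert c n; induction N; intros c n; simpl. reflexivity.
  destruct n; [reflexivity| apply (IHN (fun i => c (S i)))].
Qed.

Lemma lex_sat C K VU (W : (nat -> C) -> Prop) (ltK : K -> K -> Prop) (EU : VU -> C -> VU -> Prop) :
  prefix_independent W -> well_founded ltK -> satisfies EU W -> satisfies (lex_prod EU ltK) W.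
Proof.
  intros Hpi Hwf HW x c Hp.
  assert (Hev : forall k n, snd (x n) = k -> exists N, forall m, snd (x (N + m)) = snd (x N)).
  { intro k. induction k as [k IH] using (well_founded_induction Hwf). intros n Hn.
    destruct (classic (exists m, ltK (snd (x (n + m))) k)) as [[m Hm]|Hno].
    - exact (IH _ Hm (n + m) eq_refl).
    - exists n. assert (Hk : forall m, snd (x (n+m)) = k).
      { induction m. rewrite Nat.add_0_r; auto.
        destruct (Hp (n + m)) as [H|[H _]].
        - exfalso; apply Hno; exists (S m); rewrite Nat.add_succ_r. rewrite <- IHm. exact H.
        - rewrite Nat.add_succ_r, <- H. exact IHm. }
      intro m. rewrite Hk. rewrite <- (Hk 0), Nat.add_0_r. reflexivity. }
  destruct (Hev _ 0 eq_refl) as [N HN].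
  assert (HWs : W (fun i => c (N + i))).
  { apply (HW (fun i => fst (x (N + i)))). intro i. cbv beta.
    destruct (Hp (N + i)) as [H|[_ H]].
    - exfalso. rewrite <- Nat.add_succ_r in H. rewrite !HN in H.
      exact (wf_irrefl Hwf _ H).
    - rewrite Nat.add_succ_r; exact H. }
  assert (Hc : prepend (pre N c) (fun i => c (N + i)) = c).
  { apply functional_extensionality; intro n; apply prepend_pre. }
  rewrite <- Hc. apply (proj2 (Hpi _ _)). exact HWs.
Qed.

Lemma subtree C K VU (W : (nat -> C) -> Prop) (EU : VU -> C -> VU -> Prop)
  V (E : V -> C -> V -> Prop) t0 (S : V -> Prop) :
  (forall (V : Type) (E : V -> C -> V -> Prop) (t0 : V),
    is_pretree E t0 -> card_lt V K -> satisfies E W ->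
    exists t : V, has_morphism (@sub_edge C V E t) EU) ->
  is_pretree E t0 -> card_lt V K -> satisfies E W ->
  (forall v c w, E v c w -> S v -> S w) -> (exists v, ~ S v) ->
  exists (D : V -> Prop) (psi : V -> VU),
    (forall v, D v -> ~ S v) /\ (exists v, D v) /\
    (forall v c w, D v -> E v c w -> ~ S w -> D w) /\
    (forall v c w, D v -> D w -> E v c w -> EU (psi v) c (psi w)).
Proof.
  intros HU Htree [[fi Hfi] Hng] HW HS [v0 Hv0].
  pose (ER := fun (a : {v | ~ S v}) (c : C) (b : {v | ~ S v}) => E (proj1_sig a) c (proj1_sig b)).
  assert (ht0 : ~ S t0).
  { intro H. apply Hv0. destruct (Htree v0) as [l [Hl _]]. eapply closed_path; eauto. }
  assert (Htr : is_pretree ER (exist _ t0 ht0)).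
  { intros [x hx]. destruct (Htree x) as [l [Hl Hu]].
    destruct (@fpath_lift _ _ E S HS _ _ _ Hl ht0 hx) as [l' [Hl' Hm]].
    exists l'. split; auto. intros l'' Hl''. apply map_prj_inj. rewrite Hm. apply Hu.
    exact (@fpath_proj _ _ E (fun v => ~ S v) _ _ _ Hl''). }
  assert (Hcard : card_lt {v | ~ S v} K).
  { split.
    - exists (fun a => fi (proj1_sig a)). intros [a ha] [b hb] H. apply Hfi in H. simpl in H.
      subst. f_equal. apply proof_irrelevance.
    - intros [g Hg]. apply Hng. exists (fun k => proj1_sig (g k)). intros x y H. apply Hg.
      destruct (g x) as [a ha], (g y) as [b hb]. simpl in H. subst. f_equal.
      apply proof_irrelevance. }
  assert (HWR : satisfies ER W).
  { intros vs cs Hp. apply (HW (fun n => proj1_sig (vs n)) cs). exact Hp. }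
  destruct (HU _ ER _ Htr Hcard HWR) as [t [f Hf]].
  pose (pt := exist (fun v => reachable ER t v) t (ex_intro _ [] (@fpath_nil _ _ ER t))).
  exists (fun v => exists p : sub_vert ER t, proj1_sig (proj1_sig p) = v).
  exists (fun v => f (epsilon (inhabits pt) (fun p => proj1_sig (proj1_sig p) = v))).
  split; [|split; [|split]].
  - intros v [p Hp]. subst. exact (proj2_sig (proj1_sig p)).
  - exists (proj1_sig t), pt. reflexivity.
  - intros v c w [[[v' hv] [l Hl]] Hp] He Hw. simpl in Hp. subst v'.
    exists (exist _ (exist _ w Hw) (ex_intro _ _ (@fpath_snoc _ _ ER _ _ _ c (exist _ w Hw) Hl He))).
    reflexivity.
  - intros v c w Hv Hw He.
    pose proof (epsilon_spec (inhabits pt) (fun p => proj1_sig (proj1_sig p) = v) Hv) as Ev.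
    pose proof (epsilon_spec (inhabits pt) (fun p => proj1_sig (proj1_sig p) = w) Hw) as Ew.
    cbv beta in Ev, Ew.
    rewrite <- Ev in He at 1. rewrite <- Ew in He at 1. apply Hf. exact He.
Qed.

Lemma core C V (E : V -> C -> V -> Prop) K (ltK : K -> K -> Prop) VU (EU : VU -> C -> VU -> Prop)
  (D0 : (V -> Prop) -> V -> Prop) (psi0 : (V -> Prop) -> V -> VU) :
  (forall x y z, ltK x y -> ltK y z -> ltK x z) ->
  (forall x y, ltK x y \/ x = y \/ ltK y x) ->
  well_founded ltK ->
  ~ (exists g : K -> V, injective g) ->
  (forall S v, D0 S v -> ~ S v) ->
  (forall S, (forall v c w, E v c w -> S v -> S w) -> (exists v, ~ S v) -> exists v, D0 S v) ->
  (forall S v c w, D0 S v -> E v c w -> ~ S w -> D0 S w) ->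
  (forall S v c w, D0 S v -> D0 S w -> E v c w -> EU (psi0 S v) c (psi0 S w)) ->
  has_morphism E (lex_prod EU ltK).
Proof.
  intros Htr Htri Hwf Hinj HD1 HD2 HD3 HD4.
  pose (F := fun (k : K) (rec : forall j, ltK j k -> V -> Prop) (v : V) =>
               exists j (h : ltK j k), D0 (rec j h) v).
  pose (Sk := Fix Hwf (fun _ => V -> Prop) F).
  assert (Heq : forall k v, Sk k v <-> exists j, ltK j k /\ D0 (Sk j) v).
  { intros k v. unfold Sk at 1. rewrite Fix_eq.
    - unfold F. split.
      + intros [j [h H]]; eauto.
      + intros [j [h H]]; eauto.
    - intros x f g Hfg. unfold F. apply functional_extensionality; intro u.
      apply propositional_extensionality.
      split; intros [j [h H]]; exists j, h; [rewrite <- Hfg | rewrite Hfg]; exact H. }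
  assert (Hsub : forall j k v, ltK j k -> D0 (Sk j) v -> Sk k v).
  { intros j k v H1 H2. apply Heq. eauto. }
  assert (Hmono : forall j k v, ltK j k -> Sk j v -> Sk k v).
  { intros j k v H1 H2. apply Heq in H2. destruct H2 as [i [Hi Hd]]. apply Heq.
    exists i. split; eauto. }
  assert (Hcl : forall k v c w, E v c w -> Sk k v -> Sk k w).
  { intros k v c w He Hv. apply Heq in Hv. destruct Hv as [j [Hj Hd]].
    destruct (classic (Sk j w)) as [Hw|Hw].
    - eapply Hmono; eauto.
    - eapply Hsub; [exact Hj| eapply HD3; eauto]. }
  assert (Hst : forall v, exists k, D0 (Sk k) v).
  { intro v. apply NNPP. intro Hn.
    assert (Hnot : forall k, ~ Sk k v).
    { intros k Hk. apply Heq in Hk. destruct Hk as [j [_ Hd]]. apply Hn; eauto. }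
    assert (Hne : forall k, exists u, D0 (Sk k) u).
    { intro k. apply HD2; [ intros; eapply Hcl; eauto | exists v; apply Hnot ]. }
    apply Hinj.
    exists (fun k => epsilon (inhabits v) (fun u => D0 (Sk k) u)).
    intros j k Hjk.
    pose proof (epsilon_spec (inhabits v) (fun u => D0 (Sk j) u) (Hne j)) as Hj.
    pose proof (epsilon_spec (inhabits v) (fun u => D0 (Sk k) u) (Hne k)) as Hk.
    cbv beta in Hjk, Hj, Hk.
    destruct (Htri j k) as [H|[H|H]]; auto; exfalso.
    - apply (HD1 _ _ Hk). rewrite <- Hjk. eapply Hsub; eauto.
    - apply (HD1 _ _ Hj). rewrite Hjk. eapply Hsub; eauto. }
  assert (Hsig : forall v, {k | D0 (Sk k) v}).
  { intro v; apply constructive_indefinite_description; auto. }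
  exists (fun v => (psi0 (Sk (proj1_sig (Hsig v))) v, proj1_sig (Hsig v))).
  intros v c w He. unfold lex_prod; simpl.
  destruct (Hsig v) as [kv Hv], (Hsig w) as [kw Hw]; simpl.
  destruct (Htri kw kv) as [H|[H|H]].
  - left; exact H.
  - subst kw. right; split; auto.
  - exfalso. apply (HD1 _ _ Hw).
    assert (Hnw : ~ Sk kv w).
    { intro Hs. apply (HD1 _ _ Hw). eapply Hmono; eauto. }
    eapply Hsub; [exact H | eapply HD3; eauto].
Qed.

Theorem lemma3p8 (C : Type) (W : (nat -> C) -> Prop) (K : Type) (ltK : K -> K -> Prop)
  (VU : Type) (EU : VU -> C -> VU -> Prop) :
  prefix_independent W ->
  is_cardinal ltK ->
  is_graph EU ->
  almost_universal W ltK EU ->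
  universal_pi W ltK (lex_prod EU ltK).
Proof.
  intros Hpi [Htr [Htri [Hwf _]]] Hg [HUW HU].
  split.
  - apply lex_sat; auto.
  - intros V E t0 Htree Hlt HW.
    destruct (HU V E t0 Htree Hlt HW) as [t [f _]].
    pose (u0 := f (exist _ t (ex_intro _ [] (@fpath_nil _ _ E t)))).
    pose (P := fun (S : V -> Prop) (p : (V -> Prop) * (V -> VU)) =>
      (forall v, fst p v -> ~ S v) /\
      ((forall v c w, E v c w -> S v -> S w) -> (exists v, ~ S v) -> exists v, fst p v) /\
      (forall v c w, fst p v -> E v c w -> ~ S w -> fst p w) /\
      (forall v c w, fst p v -> fst p w -> E v c w -> EU (snd p v) c (snd p w))).
    assert (Hex : forall S, exists p, P S p).
    { intro S. destruct (classic ((forall v c w, E v c w -> S v -> S w) /\ exists v, ~ S v))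
        as [[H1 H2]|Hn].
      - destruct (@subtree C K VU W EU V E t0 S HU Htree Hlt HW H1 H2) as [D [psi [A1 [A2 [A3 A4]]]]].
        exists (D, psi). unfold P; simpl. split; [|split; [|split]]; auto.
      - exists (fun _ => False, fun _ => u0). unfold P; simpl.
        split; [|split; [|split]]; try tauto. }
    assert (Hc : forall S, {p | P S p}).
    { intro S. apply constructive_indefinite_description. apply Hex. }
    destruct Hlt as [_ Hng].
    apply (@core C V E K ltK VU EU (fun S => fst (proj1_sig (Hc S))) (fun S => snd (proj1_sig (Hc S))));
      auto; intros S; destruct (proj2_sig (Hc S)) as [A1 [A2 [A3 A4]]]; eauto.
Qed.
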